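(* Let $f_1 \in \mathcal{F}_{\mu_1,L_1}(\mathbb{R}^d)$ and $f_2 \in \mathcal{F}_{\mu_2,L_2}(\mathbb{R}^d)$ with $\mu_1 \in [0,\infty)$, $L_1 \in (\mu_1,\infty]$, $\mu_2 \in \mathbb{R}$, $L_2 \in (\mu_2,\infty]$, such that $F = f_1 - f_2$ is bounded below with $F_{lo} := \inf F$, $\emptyset \ne \operatorname{dom}\partial f_1 \subseteq \operatorname{dom}\partial f_2$ and $\operatorname{range}\partial f_2 \subseteq \operatorname{range}\partial f_1$. Assume $L_1 < \infty$ or $L_2 < \infty$, and $\mu_1+\mu_2>0$ or $\mu_1=\mu_2=0$. Run $N \ge 1$ DCA iterations from $x^0 \in \operatorname{dom}\partial f_1$: for $k = 0,\dots,N-1$ select $g_2^k \in \partial f_2(x^k)$ and $x^{k+1} \in \operatorname{argmin}_w \{f_1(w) - \langle g_2^k, w\rangle\}$, and set $g_1^{k+1} := g_2^k \in \partial f_1(x^{k+1})$; let $g_1^0 \in \partial f_1(x^0)$ and $g_2^N \in \partial f_2(x^N)$ be arbitrary. Suppose the parameters lie in the domain $D_i$ of one of the six regimes below and let $p_i := \sigma_i + \sigma_i^+$. Then $$\tfrac12 \min_{0\le k\le N} \|g_1^k - g_2^k\|^2 \le \frac{F(x^0) - F(x^N)}{p_i N}.$$ If in addition $L_1 > \mu_2$, then $$\tfrac12 \min_{0\le k\le N} \|g_1^k - g_2^k\|^2 \le \frac{F(x^0) - F_{lo}}{p_i N + \frac{1}{L_1 - \mu_2}}.$$ Regimes (with $B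 := \mu_1^{-1}+\mu_2^{-1}+L_2^{-1}$, $E := \frac{L_2+\mu_2}{L_1L_2}\cdot\frac{L_2-L_1}{-\mu_2} + \mu_1^{-1} - L_1^{-1}$): (1) $\sigma_1 = L_2^{-1}\frac{L_2-\mu_1}{L_1-\mu_1}$, $\sigma_1^+ = L_2^{-1}\big(1 + \frac{L_2^{-1}-L_1^{-1}}{\mu_1^{-1}-L_1^{-1}}\big)$; $D_1$: $L_1\ge L_2\ge\mu_1\ge0$, $L_1>\mu_2$, and $\mu_2 \ge 0$ or ($\mu_2<0$ and $E\le0$). (2) $\sigma_2 = L_1^{-1}\big(1+\frac{L_1^{-1}-L_2^{-1}}{\mu_2^{-1}-L_2^{-1}}\big)$, $\sigma_2^+ = L_1^{-1}\frac{L_1-\mu_2}{L_2-\mu_2}$; $D_2$: $L_2\ge L_1\ge\mu_2\ge0$, $L_2>\mu_1$, $\mu_1\ge0$. (3) $\sigma_3 = \frac{L_1^{-1}B}{B-L_1^{-1}}$, $\sigma_3^+ = \frac{1}{L_2+\mu_2}$; $D_3$: $\mu_2<0$, $\mu_1>0$, $L_2>\mu_1$, $L_1>\mu_2$, $B\le0$, and ($L_1\ge L_2$ and $E\ge0$) or $L_2>L_1$. (4) $\sigma_4=0$, $\sigma_4^+ = \frac{\mu_1+\mu_2}{\mu_2^2}$; $D_4$: $\mu_2<0$, $\mu_1>0$, $L_1>\mu_2$, and ($B>0$, $L_2>\mu_1$) or ($B>0$, $0<L_2\le\mu_1$) or ($B\le0$, $L_2\le0$). (5) $\sigma_5=0$,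 $\sigma_5^+ = \frac{L_2+\mu_1}{L_2^2}$; $D_5$: $L_1>\mu_1\ge L_2>0$, $L_1>\mu_2$, and $\mu_2\ge0$ or ($\mu_2<0$ and $B\le0$). (6) $\sigma_6 = \frac{L_1+\mu_2}{L_1^2}$, $\sigma_6^+=0$; $D_6$: $L_2>\mu_2\ge L_1>\mu_1\ge0$.
   Context: For $\mu\in\mathbb{R}$ and $L\in(\mu,\infty]$, $\mathcal{F}_{\mu,L}(\mathbb{R}^d)$ is the class of proper lower semicontinuous $f:\mathbb{R}^d\to\mathbb{R}$ with $f-\frac{\mu}{2}\|\cdot\|^2$ convex and, if $L<\infty$, $\frac{L}{2}\|\cdot\|^2-f$ convex ($L$ may be nonpositive). Subdifferential: $\partial f(x) = \{g+\mu x : g\in\partial(f-\frac{\mu}{2}\|\cdot\|^2)(x)\}$ (convex subdifferential), equal to $\{\nabla f(x)\}$ where $f$ is differentiable. $\operatorname{dom}\partial f=\{x:\partial f(x)\ne\emptyset\}$, $\operatorname{range}\partial f=\bigcup_x\partial f(x)$. Conventions: $1/\infty=0$ and expressions with an infinite parameter are understood as limits. *)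

(* Defs.v *)
(* R : realType, vectors in R^d are row vectors 'rV[R]_d,
   extended parameters L in (mu, +oo] are extended reals \bar R. *)
From HB Require Import structures.
From mathcomp Require Import all_boot all_order all_algebra.
From mathcomp Require Import reals constructive_ereal.
Set Implicit Arguments. Unset Strict Implicit. Unset Printing Implicit Defensive.
Import Order.TTheory GRing.Theory Num.Theory.
Local Open Scope ring_scope.

Section Defs.
Variables (R : realType) (d : nat).
Local Notation vec := 'rV[R]_d.

Definition dotv (u v : vec) : R := \sum_(i < d) u ord0 i * v ord0 i.
Definition sqn (u : vec) : R := dotv u u.

Definition convexf (h : vec -> R) : Prop :=
  forall (x y : vec) (t : R), 0 <= t -> t <= 1 ->
    h (t *: x + (1 - t) *: y) <= t * h x + (1 - t) * h y.

Definition lscf (f : vec -> R) : Prop :=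
  forall (x : vec) (e : R), 0 < e ->
    exists2 r : R, 0 < r & forall y : vec, sqn (y - x) < r -> f x - e < f y.

(* the class F_{mu,L}(R^d); L = +oo means no upper curvature condition *)
Definition inFclass (mu : R) (L : \bar R) (f : vec -> R) : Prop :=
  [/\ lscf f,
      convexf (fun x => f x - mu / 2 * sqn x)
    & forall l : R, L = l%:E -> convexf (fun x => l / 2 * sqn x - f x)].

(* subdifferential of f in F_{mu,L}:
   g \in \partial f(x)  iff  g - mu x is a convex subgradient of
   f - mu/2 ||.||^2 at x *)
Definition subdiff (mu : R) (f : vec -> R) (x g : vec) : Prop :=
  forall y : vec,
    (f x - mu / 2 * sqn x) + dotv (g - mu *: x) (y - x) <= f y - mu / 2 * sqn y.

Definition min_upto (N : nat) (h : nat -> R) : R :=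
  \big[Order.min/h 0%N]_(k < N.+1) h k.

(* 1/L with the convention 1/+oo = 0 (and MathComp's 0^-1 = 0) *)
Definition invE (x : \bar R) : R :=
  match x with EFin r => r^-1 | _ => 0 end.

Definition Bval (m1 m2 : R) (L2 : \bar R) : R := m1^-1 + m2^-1 + invE L2.

(* E = (L2+mu2)/(L1 L2) * (L2-L1)/(-mu2) + mu1^-1 - L1^-1, with infinite
   parameters understood as limits (value in \bar R since the limit
   L2 -> +oo diverges). *)
Definition Eval (m1 m2 : R) (L1 L2 : \bar R) : \bar R :=
  match L1, L2 with
  | EFin l1, EFin l2 =>
      ((l2 + m2) / (l1 * l2) * ((l2 - l1) / (- m2)) + m1^-1 - l1^-1)%:E
  | EFin _, _ => if m2 < 0 then +oo%E else -oo%E   (* limit L2 -> +oo *)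
  | _, EFin l2 => ((l2 + m2) / (l2 * m2) + m1^-1)%:E (* limit L1 -> +oo *)
  | _, _ => +oo%E                                   (* excluded case *)
  end.

Definition sig1 (m1 : R) (L1 L2 : \bar R) : R :=
  match L1, L2 with
  | EFin l1, EFin l2 => l2^-1 * (l2 - m1) / (l1 - m1)
  | EFin l1, _ => (l1 - m1)^-1                      (* limit L2 -> +oo *)
  | _, _ => 0                                       (* limit L1 -> +oo *)
  end.
Definition sig1p (m1 : R) (L1 L2 : \bar R) : R :=
  invE L2 * (1 + (if m1 == 0 then 0   (* mu1 = 0 : mu1^-1 = +oo *)
                  else (invE L2 - invE L1) / (m1^-1 - invE L1))).
Definition sig2 (m2 : R) (L1 L2 : \bar R) : R :=
  invE L1 * (1 + (if m2 == 0 then 0   (* mu2 = 0 : mu2^-1 = +oo *)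
                  else (invE L1 - invE L2) / (m2^-1 - invE L2))).
Definition sig2p (m2 : R) (L1 L2 : \bar R) : R :=
  match L1, L2 with
  | EFin l1, EFin l2 => l1^-1 * (l1 - m2) / (l2 - m2)
  | EFin _, _ => 0                                  (* limit L2 -> +oo *)
  | _, EFin l2 => (l2 - m2)^-1                      (* limit L1 -> +oo *)
  | _, _ => 0
  end.
Definition sig3 (m1 m2 : R) (L1 L2 : \bar R) : R :=
  invE L1 * Bval m1 m2 L2 / (Bval m1 m2 L2 - invE L1).
Definition sig3p (m2 : R) (L2 : \bar R) : R := invE (L2 + m2%:E)%E.
Definition sig4 : R := 0.
Definition sig4p (m1 m2 : R) : R := (m1 + m2) / m2 ^+ 2.
Definition sig5 : R := 0.
Definition sig5p (m1 : R) (L2 : \bar R) : R :=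
  match L2 with EFin l2 => (l2 + m1) / l2 ^+ 2 | _ => 0 end.
Definition sig6 (m2 : R) (L1 : \bar R) : R :=
  match L1 with EFin l1 => (l1 + m2) / l1 ^+ 2 | _ => 0 end.
Definition sig6p : R := 0.

Definition p_reg (i : nat) (m1 m2 : R) (L1 L2 : \bar R) : R :=
  match i with
  | 1%N => sig1 m1 L1 L2 + sig1p m1 L1 L2
  | 2%N => sig2 m2 L1 L2 + sig2p m2 L1 L2
  | 3%N => sig3 m1 m2 L1 L2 + sig3p m2 L2
  | 4%N => sig4 + sig4p m1 m2
  | 5%N => sig5 + sig5p m1 L2
  | 6%N => sig6 m2 L1 + sig6p
  | _ => 0
  end.

Definition D_reg (i : nat) (m1 m2 : R) (L1 L2 : \bar R) : Prop :=
  let B := Bval m1 m2 L2 in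
  let E := Eval m1 m2 L1 L2 in
  match i with
  | 1%N => [/\ (L2 <= L1)%E, (m1%:E <= L2)%E, 0 <= m1, (m2%:E < L1)%E
           & 0 <= m2 \/ (m2 < 0 /\ (E <= 0)%E)]
  | 2%N => [/\ (L1 <= L2)%E, (m2%:E <= L1)%E, 0 <= m2, (m1%:E < L2)%E & 0 <= m1]
  | 3%N => [/\ m2 < 0 /\ 0 < m1, (m1%:E < L2)%E, (m2%:E < L1)%E, B <= 0
           & ((L2 <= L1)%E /\ (0 <= E)%E) \/ (L1 < L2)%E]
  | 4%N => [/\ m2 < 0, 0 < m1, (m2%:E < L1)%E
           & [\/ 0 < B /\ (m1%:E < L2)%E,
                 [/\ 0 < B, (0 < L2)%E & (L2 <= m1%:E)%E]
               | B <= 0 /\ (L2 <= 0)%E]]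
  | 5%N => [/\ (m1%:E < L1)%E, (L2 <= m1%:E)%E, (0 < L2)%E, (m2%:E < L1)%E
           & 0 <= m2 \/ (m2 < 0 /\ B <= 0)]
  | 6%N => [/\ (m2%:E < L2)%E, (L1 <= m2%:E)%E, (m1%:E < L1)%E & 0 <= m1]
  | _ => False
  end.

End Defs.

(* Main.v *)
Require Import Defs.
From HB Require Import structures.
From mathcomp Require Import all_boot all_order all_algebra.
From mathcomp Require Import reals constructive_ereal.
From mathcomp Require Import ring lra.
Import Order.TTheory GRing.Theory Num.Theory.
Local Open Scope ring_scope.
Set Implicit Arguments. Unset Strict Implicit.

Ltac coord := rewrite /sqn /dotv;
  repeat first [ rewrite mulr_sumr | rewrite mulr_suml | rewrite -sumrN | rewrite -sumrB | rewrite -big_split ];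
  apply: eq_bigr => i _; rewrite ?mxE /=.

Section V.
Variables (R : realType) (d : nat).
Local Notation vec := 'rV[R]_d.

Lemma sqn_ge0 (v : vec) : 0 <= sqn v.
Proof. rewrite /sqn /dotv; apply: sumr_ge0 => i _; exact: mulr_ge0_le0 || nra. Qed.

Lemma lim0 (A K : R) : 0 <= K -> (forall t, 0 < t -> t <= 1 -> -(t*K) <= A) -> 0 <= A.
Proof.
move=> K0 H; rewrite leNgt; apply/negP => A0.
have KA : 0 < K - A by lra.
set t := - A / (K - A).
have ht : t * (K - A) = - A by rewrite /t mulfVK // gt_eqF.
have t0 : 0 < t by rewrite /t divr_gt0 // oppr_gt0.
have t1 : t <= 1 by rewrite /t ler_pdivrMr // mul1r; lra.
have := H t t0 t1; nra.
Qed.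

Lemma conv_pt (x y : vec) (t : R) : t *: x + (1 - t) *: y = y + t *: (x - y).
Proof. apply/rowP => i; rewrite !mxE; ring. Qed.

Lemma sub_argmin (m : R) (L : \bar R) (f : vec -> R) (z g : vec) :
  inFclass m L f -> 0 <= m ->
  (forall w, f z - dotv g z <= f w - dotv g w) -> subdiff m f z g.
Proof.
case=> _ hc _ m0 harg y.
set A := (f y - m / 2 * sqn y) - (f z - m / 2 * sqn z) - dotv (g - m *: z) (y - z).
suff : 0 <= A by rewrite /A; lra.
apply: (@lim0 A (m / 2 * sqn (y - z))).
  by apply: mulr_ge0; [lra|exact: sqn_ge0].
move=> t t0 t1.
have hw := hc y z t (ltW t0) t1.
have ha := harg (t *: y + (1 - t) *: z).
move: hw ha; rewrite conv_pt => hw ha.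
have id1 : dotv g (z + t *: (y - z)) - dotv g z
   - m / 2 * (sqn (z + t *: (y - z)) - sqn z) - t * dotv (g - m *: z) (y - z)
   = - (t ^+ 2 * (m / 2 * sqn (y - z))).
  by coord; field.
have : 0 <= t * (A + t * (m / 2 * sqn (y - z))).
  rewrite mulrDr /A.
  have -> : forall a b c : R, t * (a - b - c) = t * a - t * b - t * c by move=> *; field.
  have -> : forall b : R, t * (t * b) = t ^+ 2 * b by move=> *; field.
  move: hw; rewrite (_ : forall b : R, (1 - t) * b = b - t * b); last by move=> *; field.
  lra.
by rewrite pmulr_rge0 //; lra.
Qed.


Lemma sqnD (x w : vec) : sqn (x + w) = sqn x + 2 * dotv x w + sqn w.
Proof. by coord; ring. Qed.
Lemma sqnB (x w : vec) : sqn (x - w) = sqn x - 2 * dotv x w + sqn w.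
Proof. by coord; ring. Qed.
Lemma sqnZ (t : R) (w : vec) : sqn (t *: w) = t ^+ 2 * sqn w.
Proof. by coord; ring. Qed.
Lemma dotvZ (t : R) (g w : vec) : dotv g (t *: w) = t * dotv g w.
Proof. by coord; ring. Qed.
Lemma dotvDr (g x w : vec) : dotv g (x + w) = dotv g x + dotv g w.
Proof. by coord; ring. Qed.
Lemma dotvBr (g x w : vec) : dotv g (x - w) = dotv g x - dotv g w.
Proof. by coord; ring. Qed.
Lemma dotvBl (g h w : vec) : dotv (g - h) w = dotv g w - dotv h w.
Proof. by coord; ring. Qed.
Lemma dotvZl (t : R) (g w : vec) : dotv (t *: g) w = t * dotv g w.
Proof. by coord; ring. Qed.
Lemma dotvC (g w : vec) : dotv g w = dotv w g.
Proof. by coord; ring. Qed.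
Lemma addKv (x w : vec) : x + w - x = w.
Proof. by rewrite addrC addKr. Qed.

Lemma ub_v (m l : R) (f : vec -> R) (x g : vec) :
  m < l -> inFclass m l%:E f -> subdiff m f x g ->
  forall v, f (x + v) <= f x + dotv g v + l / 2 * sqn v.
Proof.
move=> ml [_ _ hp] hs; have hpsi := hp l erefl.
have refl : forall w, f (x + w) - f x - dotv g w - m / 2 * sqn w <= (l - m) * sqn w.
  move=> w.
  have c := hpsi (x + w) (x - w) (1 / 2) ltac:(lra) ltac:(lra).
  have e : 1 / 2 *: (x + w) + (1 - 1 / 2) *: (x - w) = x.
    by apply/rowP => i; rewrite !mxE; field.
  rewrite e in c.
  have s1 := hs (x + w); have s2 := hs (x - w).
  move: c s1 s2; rewrite addKv (_ : x - w - x = - w); last first.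
    by rewrite addrC addKr.
  rewrite !sqnB !sqnD.
  have -> : dotv (g - m *: x) (- w) = - dotv g w + m * dotv x w.
    by coord; ring.
  have -> : dotv (g - m *: x) w = dotv g w - m * dotv x w.
    by coord; ring.
  move=> c s1 s2.
  have hw := sqn_ge0 w.
  nra.
move=> v.
set A := f x + dotv g v + l / 2 * sqn v - f (x + v).
suff : 0 <= A by rewrite /A; lra.
apply: (@lim0 A ((l - m) / 2 * sqn v)).
  by apply: mulr_ge0; [lra|exact: sqn_ge0].
move=> t t0 t1.
have c := hpsi (x + v) x t (ltW t0) t1.
rewrite conv_pt addKv in c.
have r := refl (t *: v).
move: c r; rewrite !sqnD sqnZ !dotvZ => c r.
have : 0 <= t * (A + t * ((l - m) / 2 * sqn v)).
  rewrite /A; lra.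
by rewrite pmulr_rge0 //; lra.
Qed.

Lemma interp_fin (m l : R) (f : vec -> R) (x gx y gy : vec) :
  m < l -> inFclass m l%:E f -> subdiff m f x gx -> subdiff m f y gy ->
  0 <= f y - f x - dotv gx (y - x) - m / 2 * sqn (y - x)
       - (l - m)^-1 / 2 * sqn (gy - gx - m *: (y - x)).
Proof.
move=> ml hf sx sy.
set w := gy - gx - m *: (y - x).
set v := - ((l - m)^-1) *: w.
have u := @ub_v m l f y gy ml hf sy v.
have s := sx (y + v).
have lm : l - m != 0 by rewrite subr_eq0 gt_eqF.
have e : dotv gy v + l / 2 * sqn v + m / 2 * sqn x - dotv (gx - m *: x) (y + v - x)
   - m / 2 * sqn (y + v) = - dotv gx (y - x) - m / 2 * sqn (y - x)
   - (l - m)^-1 / 2 * sqn w.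
  rewrite /v /w; coord; field => //.
lra.
Qed.

Lemma sub_ineq (m : R) (f : vec -> R) (x g y : vec) :
  subdiff m f x g -> 0 <= f y - f x - dotv g (y - x) - m / 2 * sqn (y - x).
Proof.
move=> sx; have s := sx y.
have e : dotv (g - m *: x) (y - x) + m / 2 * sqn y - m / 2 * sqn x
   = dotv g (y - x) + m / 2 * sqn (y - x) by coord; field.
lra.
Qed.

Lemma interp (m : R) (L : \bar R) (f : vec -> R) (x gx y gy : vec) :
  (m%:E < L)%E -> inFclass m L f -> subdiff m f x gx -> subdiff m f y gy ->
  0 <= f y - f x - dotv gx (y - x) - m / 2 * sqn (y - x)
       - invE (L - m%:E)%E / 2 * sqn (gy - gx - m *: (y - x)).
Proof.
case: L => [l| |] //= ml hf sx sy.
- by apply: interp_fin => //; rewrite -lte_fin.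
- by rewrite mul0r mul0r subr0; exact: sub_ineq.
Qed.

Definition Qs (m1 m2 al1 al2 a b dl u v : R) : R :=
  - (a * u * dl) + b * v * dl + ((1 + 2 * a) * m1 + (1 + 2 * b) * m2) / 2 * dl ^+ 2
  + (1 + 2 * a) * al1 / 2 * (u - m1 * dl) ^+ 2
  + (1 + 2 * b) * al2 / 2 * (v + m2 * dl) ^+ 2.

Definition cert (m1 m2 al1 al2 a b s sp wu wv : R) : Prop :=
  0 <= a /\ 0 <= b /\ 0 <= (1 + 2 * a) * al1 - s /\ 0 <= (1 + 2 * b) * al2 - sp /\
      a * (1 + 2 * m1 * al1) + m1 * al1 = ((1 + 2 * a) * al1 - s) * wu /\
      b * (1 + 2 * m2 * al2) + m2 * al2 = - (((1 + 2 * b) * al2 - sp) * wv) /\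
    ((1 + 2 * a) * al1 - s) * wu ^+ 2 + ((1 + 2 * b) * al2 - sp) * wv ^+ 2
      <= (1 + 2 * a) * m1 * (1 + m1 * al1) + (1 + 2 * b) * m2 * (1 + m2 * al2).

Lemma Qs_ge m1 m2 al1 al2 a b s sp wu wv dl u v :
  cert m1 m2 al1 al2 a b s sp wu wv ->
  0 <= Qs m1 m2 al1 al2 a b dl u v - s / 2 * u ^+ 2 - sp / 2 * v ^+ 2.
Proof.
case=> a0 [b0 [uu0 [vv0 [hdu [hdv hC]]]]].
set uu := (1 + 2 * a) * al1 - s in uu0 hdu hC *.
set vv := (1 + 2 * b) * al2 - sp in vv0 hdv hC *.
set C := (1 + 2 * a) * m1 * (1 + m1 * al1) + (1 + 2 * b) * m2 * (1 + m2 * al2) in hC.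
have -> : Qs m1 m2 al1 al2 a b dl u v - s / 2 * u ^+ 2 - sp / 2 * v ^+ 2
  = 1 / 2 * (C * dl ^+ 2 - 2 * (a * (1 + 2 * m1 * al1) + m1 * al1) * dl * u
      + 2 * (b * (1 + 2 * m2 * al2) + m2 * al2) * dl * v + uu * u ^+ 2 + vv * v ^+ 2).
  by rewrite /Qs /C /uu /vv; field.
rewrite hdu hdv.
have -> : C * dl ^+ 2 - 2 * (uu * wu) * dl * u + 2 * - (vv * wv) * dl * v + uu * u ^+ 2 + vv * v ^+ 2
  = uu * (u - wu * dl) ^+ 2 + vv * (v - wv * dl) ^+ 2 + (C - uu * wu ^+ 2 - vv * wv ^+ 2) * dl ^+ 2.
  by field.
apply: mulr_ge0; first lra.
have h1 : 0 <= uu * (u - wu * dl) ^+ 2 by apply: mulr_ge0 => //; exact: sqr_ge0.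
have h2 : 0 <= vv * (v - wv * dl) ^+ 2 by apply: mulr_ge0 => //; exact: sqr_ge0.
have h3 : 0 <= (C - uu * wu ^+ 2 - vv * wv ^+ 2) * dl ^+ 2.
  by apply: mulr_ge0; [lra| exact: sqr_ge0].
lra.
Qed.

Lemma one_step (m1 m2 : R) (L1 L2 : \bar R) (f1 f2 : vec -> R) (x xp g1 g2 h : vec)
    (a b s sp wu wv : R) :
  (m1%:E < L1)%E -> (m2%:E < L2)%E -> inFclass m1 L1 f1 -> inFclass m2 L2 f2 ->
  subdiff m1 f1 x g1 -> subdiff m1 f1 xp g2 -> subdiff m2 f2 x g2 -> subdiff m2 f2 xp h ->
  cert m1 m2 (invE (L1 - m1%:E)%E) (invE (L2 - m2%:E)%E) a b s sp wu wv ->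
  s / 2 * sqn (g1 - g2) + sp / 2 * sqn (g2 - h) <= (f1 x - f2 x) - (f1 xp - f2 xp).
Proof.
move=> hL1 hL2 hf1 hf2 s1x s1p s2x s2p hc.
have IA := interp hL1 hf1 s1p s1x.
have IA' := interp hL1 hf1 s1x s1p.
have IB := interp hL2 hf2 s2x s2p.
have IB' := interp hL2 hf2 s2p s2x.
move: hc (hc) IA IA' IB IB'.
set al1 := invE (L1 - m1%:E)%E; set al2 := invE (L2 - m2%:E)%E.
case=> a0 [b0 _] hc IA IA' IB IB'.
have key : (1 + a) * (dotv g2 (x - xp) + m1 / 2 * sqn (x - xp) + al1 / 2 * sqn (g1 - g2 - m1 *: (x - xp)))
  + a * (dotv g1 (xp - x) + m1 / 2 * sqn (xp - x) + al1 / 2 * sqn (g2 - g1 - m1 *: (xp - x)))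
  + (1 + b) * (dotv g2 (xp - x) + m2 / 2 * sqn (xp - x) + al2 / 2 * sqn (h - g2 - m2 *: (xp - x)))
  + b * (dotv h (x - xp) + m2 / 2 * sqn (x - xp) + al2 / 2 * sqn (g2 - h - m2 *: (x - xp)))
  - s / 2 * sqn (g1 - g2) - sp / 2 * sqn (g2 - h)
  = \sum_(i < d) (Qs m1 m2 al1 al2 a b (x ord0 i - xp ord0 i) (g1 ord0 i - g2 ord0 i) (h ord0 i - g2 ord0 i)
      - s / 2 * (g1 ord0 i - g2 ord0 i) ^+ 2 - sp / 2 * (h ord0 i - g2 ord0 i) ^+ 2).
  by coord; rewrite /Qs; field.
have hs : 0 <= \sum_(i < d) (Qs m1 m2 al1 al2 a b (x ord0 i - xp ord0 i) (g1 ord0 i - g2 ord0 i) (h ord0 i - g2 ord0 i)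
      - s / 2 * (g1 ord0 i - g2 ord0 i) ^+ 2 - sp / 2 * (h ord0 i - g2 ord0 i) ^+ 2).
  by apply: sumr_ge0 => i _; apply: Qs_ge; exact: hc.
have a1 : 0 <= 1 + a by lra.
have b1 : 0 <= 1 + b by lra.
have pA := mulr_ge0 a1 IA.
have pA' := mulr_ge0 a0 IA'.
have pB := mulr_ge0 b1 IB.
have pB' := mulr_ge0 b0 IB'.
lra.
Qed.

Lemma tail_bound (m1 m2 : R) (L1 : \bar R) (f1 f2 : vec -> R) (x g1 g2 : vec) (Flo : R) :
  (m1%:E < L1)%E -> (m2%:E < L1)%E -> inFclass m1 L1 f1 ->
  subdiff m1 f1 x g1 -> subdiff m2 f2 x g2 -> (forall y, Flo <= f1 y - f2 y) ->
  invE (L1 - m2%:E)%E / 2 * sqn (g1 - g2) <= (f1 x - f2 x) - Flo.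
Proof.
case: L1 => [l| |] //= h1 h2 hf s1 s2 hF; last first.
  by rewrite mul0r mul0r; have := hF x; lra.
move: h1 h2; rewrite !lte_fin => h1 h2.
set v := - ((l - m2)^-1) *: (g1 - g2).
have u := @ub_v m1 l f1 x g1 h1 hf s1 v.
have w := @sub_ineq m2 f2 x g2 (x + v) s2.
rewrite addKv in w.
have lm : l - m2 != 0 by rewrite subr_eq0 gt_eqF.
have e : dotv g1 v + l / 2 * sqn v - dotv g2 v - m2 / 2 * sqn v
   = - ((l - m2)^-1 / 2 * sqn (g1 - g2)).
  by rewrite /v; coord; field.
have := hF (x + v); lra.
Qed.

End V.

Section Asm.
Variable R : realType.

Lemma big_min_le (r : seq nat) (x0 : R) (h : nat -> R) k :
  k \in r -> \big[Order.min/x0]_(i <- r) h i <= h k.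
Proof.
elim: r => [|y r IH] //; rewrite in_cons big_cons => /orP [/eqP ->|kr].
  by rewrite ge_min lexx.
by rewrite ge_min IH // orbT.
Qed.

Lemma min_upto_le (N : nat) (h : nat -> R) k : (k <= N)%N -> min_upto N h <= h k.
Proof.
move=> kN; rewrite /min_upto.
rewrite -(big_map (@nat_of_ord N.+1) xpredT h).
apply: big_min_le.
apply/mapP; exists (Ordinal (n := N.+1) (m := k) kN) => //.
exact: mem_index_enum.
Qed.

Lemma assemble (N : nat) (F a : nat -> R) (s sp gam Flo : R) :
  (1 <= N)%N -> 0 <= s -> 0 <= sp -> 0 < s + sp -> 0 <= gam ->
  (forall k, (k < N)%N -> s / 2 * a k + sp / 2 * a k.+1 <= F k - F k.+1) ->
  min_upto N a / 2 <= (F 0%N - F N) / ((s + sp) * N%:R)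
  /\ (gam / 2 * a N <= F N - Flo ->
      min_upto N a / 2 <= (F 0%N - Flo) / ((s + sp) * N%:R + gam)).
Proof.
move=> N1 s0 sp0 p0 g0 H.
set mn := min_upto N a.
have hm : forall k, (k <= N)%N -> mn <= a k by move=> k kN; exact: min_upto_le.
have tel : \sum_(k < N) (F k - F k.+1) = F 0%N - F N.
  have := @telescope_sumr _ 0 N (fun k => - F k) (leq0n N).
  rewrite big_mkord => e.
  have -> : F 0%N - F N = - F N - - F 0%N by ring.
  rewrite -e; apply: eq_bigr => i _; ring.
have hs : \sum_(k < N) ((s + sp) / 2 * mn) <= \sum_(k < N) (F k - F k.+1).
  apply: ler_sum => i _.
  have h1 := hm i (ltnW (ltn_ord i)).
  have h2 := hm i.+1 (ltn_ord i).
  have := H i (ltn_ord i); nra.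
rewrite sumr_const card_ord tel in hs.
have Np : 0 < N%:R :> R by rewrite ltr0n.
have pN : 0 < (s + sp) * N%:R by apply: mulr_gt0.
have e1 : ((s + sp) / 2 * mn) *+ N = (s + sp) * N%:R * (mn / 2).
  by rewrite -mulr_natr; field.
rewrite e1 in hs.
split.
  by rewrite ler_pdivlMr // mulrC.
move=> ht.
have hN := hm N (leqnn N).
have pg : 0 < (s + sp) * N%:R + gam by lra.
rewrite ler_pdivlMr // mulrDl.
have : gam * (mn / 2) <= gam / 2 * a N.
  have hN2 : 0 <= a N - mn by lra.
  have := mulr_ge0 g0 hN2; lra.
lra.
Qed.
End Asm.


Ltac fld := field; try by (repeat (apply/andP; split)); try assumption.

Section R6.
Variable R : realType.

Lemma reg6 (m1 m2 : R) (L1 L2 : \bar R) :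
  0 <= m1 -> (m1%:E < L1)%E -> (m2%:E < L2)%E ->
  D_reg 6 m1 m2 L1 L2 ->
  exists s sp a b wu wv : R,
    [/\ p_reg 6 m1 m2 L1 L2 = s + sp, 0 <= s, 0 <= sp, 0 < s + sp &
        cert m1 m2 (invE (L1 - m1%:E)%E) (invE (L2 - m2%:E)%E) a b s sp wu wv].
Proof.
move=> m10 h1 h2 [_ h3 _ _].
case: L1 h1 h3 => [l1| |] //= h1 h3; rewrite /sig6p.
move: h1 h3; rewrite !lte_fin !lee_fin => h1 h3.
set al2 := invE (L2 - m2%:E)%E.
have al20 : 0 <= al2.
  rewrite /al2; case: (L2) h2 => [l2| |] //=; rewrite ?lte_fin => h2.
  by rewrite invr_ge0 subr_ge0 ltW.
have l10 : 0 < l1 by lra.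
have l1n : l1 != 0 by rewrite gt_eqF.
have lm : l1 - m1 != 0 by rewrite subr_eq0 gt_eqF.
exists ((l1 + m2) / l1 ^+ 2), 0, (m2 / l1), 0, l1, (- m2).
have s0 : 0 < (l1 + m2) / l1 ^+ 2 by apply: divr_gt0; [lra| exact: exprn_gt0].
split; rewrite ?addr0 //; first exact: ltW.
have uu : (1 + 2 * (m2 / l1)) * (l1 - m1)^-1 - (l1 + m2) / l1 ^+ 2
   = (l1 * m2 + l1 * m1 + m1 * m2) / (l1 ^+ 2 * (l1 - m1)).
  by fld.
rewrite /cert uu.
repeat split.
- by apply: divr_ge0; lra.
- by [].
- apply: divr_ge0; first nra.
  by apply: mulr_ge0; [exact: sqr_ge0| lra].
- by rewrite mulr0 addr0 mul1r subr0.
- by rewrite -uu; fld.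
- ring.
- rewrite -uu le_eqVlt; apply/orP; left; apply/eqP; fld.
Qed.
End R6.

Section R45.
Variable R : realType.

Lemma invE_ge0 (m : R) (L : \bar R) : (m%:E < L)%E -> 0 <= invE (L - m%:E)%E.
Proof.
case: L => [l| |] //=; rewrite ?lte_fin => h.
by rewrite invr_ge0 subr_ge0 ltW.
Qed.

Lemma reg5 (m1 m2 : R) (L1 L2 : \bar R) :
  0 <= m1 -> (m1%:E < L1)%E -> (m2%:E < L2)%E ->
  D_reg 5 m1 m2 L1 L2 ->
  exists s sp a b wu wv : R,
    [/\ p_reg 5 m1 m2 L1 L2 = s + sp, 0 <= s, 0 <= sp, 0 < s + sp &
        cert m1 m2 (invE (L1 - m1%:E)%E) (invE (L2 - m2%:E)%E) a b s sp wu wv].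
Proof.
move=> m10 h1 h2 [_ h3 h4 _ h5].
have al10 := invE_ge0 h1.
move: al10; set al1 := invE (L1 - m1%:E)%E => al10.
case: L2 h2 h3 h4 h5 => [l2| |] //= h2 h3 h4 h5.
move: h2 h3 h4; rewrite !lte_fin !lee_fin => h2 h3 h4.
rewrite /sig5 /sig5p /=.
have l2n : l2 != 0 by rewrite gt_eqF.
have lm : l2 - m2 != 0 by rewrite subr_eq0 gt_eqF.
have m1n : m1 != 0 by rewrite gt_eqF //; lra.
set sp := (l2 + m1) / l2 ^+ 2.
have sp0 : 0 < sp by apply: divr_gt0; [lra| exact: exprn_gt0].
exists 0, sp, 0, (m1 / l2), m1, (- l2).
rewrite add0r; split => //; first exact: ltW.
have vv : (1 + 2 * (m1 / l2)) * (l2 - m2)^-1 - sp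
   = (l2 * m1 + l2 * m2 + m1 * m2) / (l2 ^+ 2 * (l2 - m2)) by rewrite /sp; fld.
rewrite /cert vv.
have num : 0 <= l2 * m1 + l2 * m2 + m1 * m2.
  case: h5 => [m20|[m20 hB]]; first by nra.
  have m2n : m2 != 0 by rewrite lt_eqF.
  have e : l2 * m1 + l2 * m2 + m1 * m2 = Bval m1 m2 l2%:E * (m1 * m2 * l2).
    by rewrite /Bval /=; fld.
  rewrite e; apply: mulr_le0 => //.
  have : m1 * m2 < 0 by nra.
  nra.
repeat split.
- by [].
- by apply: divr_ge0; lra.
- lra.
- by apply: divr_ge0 => //; apply: mulr_ge0; [exact: sqr_ge0| lra].
- ring.
- fld.
- rewrite le_eqVlt; apply/orP; left; apply/eqP; fld.
Qed.

Lemma reg4 (m1 m2 : R) (L1 L2 : \bar R) :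
  0 <= m1 -> (m1%:E < L1)%E -> (m2%:E < L2)%E ->
  0 < m1 + m2 \/ (m1 = 0 /\ m2 = 0) ->
  D_reg 4 m1 m2 L1 L2 ->
  exists s sp a b wu wv : R,
    [/\ p_reg 4 m1 m2 L1 L2 = s + sp, 0 <= s, 0 <= sp, 0 < s + sp &
        cert m1 m2 (invE (L1 - m1%:E)%E) (invE (L2 - m2%:E)%E) a b s sp wu wv].
Proof.
move=> m10 h1 h2 hpos [m20 m1p _ hB].
have s12 : 0 < m1 + m2 by case: hpos => // [[_ e]]; lra.
have al10 := invE_ge0 h1.
move: al10; set al1 := invE (L1 - m1%:E)%E => al10.
have m2n : m2 != 0 by rewrite lt_eqF.
have m1n : m1 != 0 by rewrite gt_eqF.
case: L2 h2 hB => [l2| |] //= h2 hB; last first.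
  exfalso; move: hB; rewrite /Bval /= addr0.
  have e : m1^-1 + m2^-1 = (m1 + m2) / (m1 * m2) by fld.
  rewrite e.
  have : (m1 + m2) / (m1 * m2) < 0.
    have hm : m1 * m2 < 0 by nra.
    have : (m1 * m2)^-1 < 0 by rewrite invr_lt0.
    nra.
  move=> hl; case=> [[hb _]|[hb _ _]|[_ hb]]; try lra.
  by move: hb.
move: h2; rewrite !lte_fin => h2.
rewrite /sig4 /sig4p /=.
have lm : l2 - m2 != 0 by rewrite subr_eq0 gt_eqF.
set sp := (m1 + m2) / m2 ^+ 2.
have sp0 : 0 < sp by apply: divr_gt0 => //; exact: exprn_gt0 || (rewrite exprn_even_gt0 //).
exists 0, sp, 0, (- (m1 + m2) / m2), m1, (- m2).
rewrite add0r; split => //; first exact: ltW.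
have vv : (1 + 2 * (- (m1 + m2) / m2)) * (l2 - m2)^-1 - sp
   = (- (m1 * m2) - (m1 + m2) * l2) / (m2 ^+ 2 * (l2 - m2)) by rewrite /sp; fld.
rewrite /cert vv.
have num : 0 <= - (m1 * m2) - (m1 + m2) * l2.
  case: hB => [[hb hl]|[hb hl _]|[_ hl]].
  - have l2p : 0 < l2 by rewrite lte_fin in hl; lra.
    have l2n : l2 != 0 by rewrite gt_eqF.
    have e : - (m1 * m2) - (m1 + m2) * l2 = - (Bval m1 m2 l2%:E * (m1 * m2 * l2)).
      by rewrite /Bval /=; fld.
    rewrite e oppr_ge0; apply: ltW; rewrite pmulr_rlt0 //.
    have hm : m1 * m2 < 0 by nra.
    nra.
  - have l2p : 0 < l2 by rewrite lte_fin in hl.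
    have l2n : l2 != 0 by rewrite gt_eqF.
    have e : - (m1 * m2) - (m1 + m2) * l2 = - (Bval m1 m2 l2%:E * (m1 * m2 * l2)).
      by rewrite /Bval /=; fld.
    rewrite e oppr_ge0; apply: ltW; rewrite pmulr_rlt0 //.
    have hm : m1 * m2 < 0 by nra.
    nra.
  - rewrite lee_fin in hl; nra.
repeat split.
- by [].
- by apply: mulr_le0; [lra| rewrite invr_le0; lra].
- lra.
- apply: divr_ge0 => //; apply: mulr_ge0; [exact: sqr_ge0| lra].
- ring.
- fld.
- rewrite le_eqVlt; apply/orP; left; apply/eqP; fld.
Qed.
End R45.

Section R123.
Variable R : realType.

Lemma reg1 (m1 m2 : R) (L1 L2 : \bar R) :
  0 <= m1 -> (m1%:E < L1)%E -> (m2%:E < L2)%E ->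
  (L1 < +oo)%E \/ (L2 < +oo)%E -> 0 < m1 + m2 \/ (m1 = 0 /\ m2 = 0) ->
  D_reg 1 m1 m2 L1 L2 ->
  exists s sp a b wu wv : R,
    [/\ p_reg 1 m1 m2 L1 L2 = s + sp, 0 <= s, 0 <= sp, 0 < s + sp &
        cert m1 m2 (invE (L1 - m1%:E)%E) (invE (L2 - m2%:E)%E) a b s sp wu wv].
Proof.
move=> m10 h1 h2 hfin hpos [h21 h12 _ hm2L1 hE].
case: L2 h2 h21 h12 hfin hE => [l2| |] //= h2 h21 h12 hfin hE; last first.
  by case: (L1) h21 hfin => [l1| |] //= _ [].
move: h2 h12; rewrite !lte_fin !lee_fin => h2 h12.
have l2p : 0 < l2.
  case: hpos => [hp|[e1 e2]]; lra.
have l2n : l2 != 0 by rewrite gt_eqF.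
have lm2 : l2 - m2 != 0 by rewrite subr_eq0 gt_eqF.
have m1p : m2 < 0 -> 0 < m1 by case: hpos => [hp|[e1 e2]] hm; lra.
case: L1 h1 h21 hm2L1 hE hfin => [l1| |] //= h1 h21 hm2L1 hE _.
-
  move: h1 h21 hm2L1 hE; rewrite !lte_fin !lee_fin => h1 h21 hm2L1 hE.
  have l1n : l1 != 0 by rewrite gt_eqF //; lra.
  have lm1 : l1 - m1 != 0 by rewrite subr_eq0 gt_eqF.
  set b := m1 * (l1 - l2) / (l2 * (l1 - m1)).
  have b0 : 0 <= b by apply: divr_ge0; nra.
  set s := l2^-1 * (l2 - m1) / (l1 - m1).
  have s0 : 0 <= s by apply: divr_ge0; [apply: mulr_ge0; [rewrite invr_ge0|]|]; lra.
  have sp0 : 0 < (1 + b) / l2 by apply: divr_gt0; lra.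
  exists s, ((1 + b) / l2), 0, b, l2, (- l2).
  split; [ | exact: s0 | exact: ltW | lra | ].
    rewrite /sig1p /=; case: eqP => [e|/eqP m1n].
      by rewrite /b e; fld.
    rewrite /b; congr (_ + _); fld.
  have uu : (1 + 2 * 0) * (l1 - m1)^-1 - s = m1 / (l2 * (l1 - m1)) by rewrite /s; fld.
  have vv : (1 + 2 * b) * (l2 - m2)^-1 - (1 + b) / l2
      = (b * (l2 + m2) + m2) / (l2 * (l2 - m2)) by fld.
  rewrite /cert uu vv.
  have num : 0 <= b * (l2 + m2) + m2.
    case: hE => [m20|[m20 hE]]; first nra.
    have m1q := m1p m20.
    have m2n : m2 != 0 by rewrite lt_eqF.
    have m1n : m1 != 0 by rewrite gt_eqF.
    have e : b * (l2 + m2) + m2 = ((l2 + m2) / (l1 * l2) * ((l2 - l1) / - m2) + m1^-1 - l1^-1)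
                 * (l1 * m2 * m1) / (l1 - m1).
      by rewrite /b; fld; rewrite oppr_eq0.
    rewrite e; apply: divr_ge0; last lra.
    apply: mulr_le0 => //.
    have : m2 * m1 < 0 by nra.
    nra.
  repeat split.
  + by [].
  + by [].
  + by apply: divr_ge0; nra.
  + by apply: divr_ge0 => //; apply: mulr_ge0; lra.
  + by rewrite -uu /s; fld.
  + by rewrite -vv; fld.
  + rewrite le_eqVlt; apply/orP; left; apply/eqP; rewrite /b; fld.
-
  move: hE; rewrite lee_fin => hE.
  set b := m1 / l2.
  have b0 : 0 <= b by apply: divr_ge0; lra.
  have sp0 : 0 < (1 + b) / l2 by apply: divr_gt0; lra.
  exists 0, ((1 + b) / l2), 0, b, 0, (- l2).
  split; [ | by [] | exact: ltW | lra | ].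
    rewrite /sig1p /= add0r; case: eqP => [e|/eqP m1n].
      by rewrite /b e; fld.
    by rewrite add0r /b !subr0; fld.
  have vv : (1 + 2 * b) * (l2 - m2)^-1 - (1 + b) / l2
      = (b * (l2 + m2) + m2) / (l2 * (l2 - m2)) by fld.
  rewrite /cert vv.
  have num : 0 <= b * (l2 + m2) + m2.
    case: hE => [m20|[m20 hE]]; first nra.
    have m1q := m1p m20.
    have m2n : m2 != 0 by rewrite lt_eqF.
    have m1n : m1 != 0 by rewrite gt_eqF.
    have e : b * (l2 + m2) + m2 = ((l2 + m2) / (l2 * m2) + m1^-1) * (m1 * m2).
      by rewrite /b; fld.
    rewrite e; apply: mulr_le0 => //; nra.
  repeat split.
  + by [].
  + by [].
  + lra.
  + by apply: divr_ge0 => //; apply: mulr_ge0; lra.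
  + ring.
  + by rewrite -vv; fld.
  + rewrite le_eqVlt; apply/orP; left; apply/eqP; rewrite /b; fld.
Qed.
Lemma reg2 (m1 m2 : R) (L1 L2 : \bar R) :
  0 <= m1 -> (m1%:E < L1)%E -> (m2%:E < L2)%E ->
  (L1 < +oo)%E \/ (L2 < +oo)%E ->
  D_reg 2 m1 m2 L1 L2 ->
  exists s sp a b wu wv : R,
    [/\ p_reg 2 m1 m2 L1 L2 = s + sp, 0 <= s, 0 <= sp, 0 < s + sp &
        cert m1 m2 (invE (L1 - m1%:E)%E) (invE (L2 - m2%:E)%E) a b s sp wu wv].
Proof.
move=> m10 h1 h2 hfin [h12 hm2 m20 hm1L2 _].
case: L1 h1 h12 hm2 hfin => [l1| |] //= h1 h12 hm2 hfin; last first.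
  by case: (L2) h12 hfin => [l2| |] //= _ [].
move: h1 hm2; rewrite !lte_fin !lee_fin => h1 hm2.
have l1p : 0 < l1 by lra.
have l1n : l1 != 0 by rewrite gt_eqF.
have lm1 : l1 - m1 != 0 by rewrite subr_eq0 gt_eqF.
case: L2 h2 h12 hm1L2 hfin => [l2| |] //= h2 h12 hm1L2 _.
- move: h2 h12; rewrite !lte_fin !lee_fin => h2 h12.
  have l2n : l2 != 0 by rewrite gt_eqF //; lra.
  have lm2 : l2 - m2 != 0 by rewrite subr_eq0 gt_eqF.
  set a := m2 * (l2 - l1) / (l1 * (l2 - m2)).
  have a0 : 0 <= a by apply: divr_ge0; nra.
  set sp := l1^-1 * (l1 - m2) / (l2 - m2).
  have sp0 : 0 <= sp by apply: divr_ge0; [apply: mulr_ge0; [rewrite invr_ge0|]|]; lra.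
  have s0 : 0 < (1 + a) / l1 by apply: divr_gt0; lra.
  exists ((1 + a) / l1), sp, a, 0, l1, (- l1).
  split; [ | exact: ltW | exact: sp0 | lra | ].
    rewrite /sig2 /=; case: eqP => [e|/eqP m2n].
      by rewrite /a e; fld.
    rewrite /a; congr (_ + _); fld.
  have uu : (1 + 2 * a) * (l1 - m1)^-1 - (1 + a) / l1 = (a * l1 + m1 + a * m1) / (l1 * (l1 - m1)) by fld.
  have vv : (1 + 2 * 0) * (l2 - m2)^-1 - sp = m2 / (l1 * (l2 - m2)) by rewrite /sp; fld.
  rewrite /cert uu vv.
  repeat split.
  + by [].
  + by [].
  + by apply: divr_ge0; nra.
  + by apply: divr_ge0 => //; nra.
  + by rewrite -uu; fld.
  + fld.
  + rewrite le_eqVlt; apply/orP; left; apply/eqP; rewrite /a /sp; fld.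
- set a := m2 / l1.
  have a0 : 0 <= a by apply: divr_ge0; lra.
  have s0 : 0 < (1 + a) / l1 by apply: divr_gt0; lra.
  exists ((1 + a) / l1), 0, a, 0, l1, 0.
  split; [ | exact: ltW | by [] | lra | ].
    rewrite /sig2 /=; case: eqP => [e|/eqP m2n].
      by rewrite /a e; fld.
    by rewrite /a !subr0 addr0; fld.
  have uu : (1 + 2 * a) * (l1 - m1)^-1 - (1 + a) / l1 = (a * l1 + m1 + a * m1) / (l1 * (l1 - m1)) by fld.
  rewrite /cert uu.
  repeat split.
  + by [].
  + by [].
  + by apply: divr_ge0; nra.
  + lra.
  + by rewrite -uu; fld.
  + ring.
  + rewrite le_eqVlt; apply/orP; left; apply/eqP; rewrite /a; fld.
Qed.

Lemma r3_L2 (m1 m2 : R) (L2 : \bar R) (B : R) :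
  m2 < 0 -> 0 < m1 -> (m1%:E < L2)%E -> (m2%:E < L2)%E -> B = Bval m1 m2 L2 -> B <= 0 ->
  0 < m1 + m2 ->
  exists b sp : R,
   [/\ 0 <= b /\ 0 <= sp, invE (L2 + m2%:E)%E = sp,
       (1 + 2 * b) * m2 * (1 + m2 * invE (L2 - m2%:E)%E) = m1 / (m1 * B - 1),
       (1 + 2 * b) * invE (L2 - m2%:E)%E - sp = 0 /\
       b * (1 + 2 * m2 * invE (L2 - m2%:E)%E) + m2 * invE (L2 - m2%:E)%E = 0
     & ((L2 < +oo)%E -> 0 < sp) /\ (0 < sp \/ B < 0)].
Proof.
move=> m20 m1p hm1L2 h2 hBdef hB s12.
have m1n : m1 != 0 by rewrite gt_eqF.
have m2n : m2 != 0 by rewrite lt_eqF.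
have mB : m1 * B - 1 < 0 by nra.
have mBn : m1 * B - 1 != 0 by rewrite lt_eqF.
move: hBdef; rewrite /Bval.
case: L2 h2 hm1L2 => [l2| |] //= h2 hm1L2 hBdef.
- move: h2 hm1L2; rewrite !lte_fin => h2 hm1L2.
  have l2n : l2 != 0 by rewrite gt_eqF //; lra.
  have lm2 : l2 - m2 != 0 by rewrite subr_eq0 gt_eqF.
  have hpoly : 0 <= m2 * l2 + m1 * l2 + m1 * m2.
    have e : m2 * l2 + m1 * l2 + m1 * m2 = - B * (- (m1 * m2 * l2)) by rewrite hBdef; fld.
    rewrite e; apply: mulr_ge0; first lra.
    have : m1 * m2 < 0 by nra.
    nra.
  have lp2 : 0 < l2 + m2 by nra.
  have lpn : l2 + m2 != 0 by rewrite gt_eqF.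
  exists (- m2 / (l2 + m2)), ((l2 + m2)^-1).
  split.
  + by split; [apply: divr_ge0; lra| rewrite invr_ge0 ltW].
  + by [].
  + by apply: (mulIf mBn); rewrite divfK //; rewrite hBdef; fld.
  + by split; fld.
  + by split; [move=> _|left]; rewrite invr_gt0.
- exists 0, 0.
  split => //.
  + by apply: (mulIf mBn); rewrite divfK //; rewrite hBdef; fld.
  + by split; ring.
  + split => //; right.
    have e : B = (m1 + m2) / (m1 * m2) by rewrite hBdef; fld.
    have hm : m1 * m2 < 0 by nra.
    have : (m1 * m2)^-1 < 0 by rewrite invr_lt0.
    rewrite e; nra.
Qed.

Lemma r3_L1 (m1 m2 B b sp al2 : R) (L1 : \bar R) :
  0 < m1 -> m2 < 0 -> (m1%:E < L1)%E -> B <= 0 -> 0 <= b -> 0 <= sp ->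
  (1 + 2 * b) * m2 * (1 + m2 * al2) = m1 / (m1 * B - 1) ->
  (1 + 2 * b) * al2 - sp = 0 ->
  b * (1 + 2 * m2 * al2) + m2 * al2 = 0 ->
  (L1 = +oo%E -> 0 < sp) -> (0 < sp \/ B < 0) ->
  exists s wu : R,
   [/\ invE L1 * B / (B - invE L1) = s, 0 <= s, 0 < s + sp &
       cert m1 m2 (invE (L1 - m1%:E)%E) al2 0 b s sp wu 0].
Proof.
move=> m1p m20 h1 hB b0 sp0 hrho hvv hc6 hinf hor.
have m1n : m1 != 0 by rewrite gt_eqF.
have mB : m1 * B - 1 < 0 by nra.
have mBn : m1 * B - 1 != 0 by rewrite lt_eqF.
case: L1 h1 hinf => [l1| |] //= h1 hinf.
- move: h1; rewrite lte_fin => h1.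
  have l1p : 0 < l1 by lra.
  have l1n : l1 != 0 by rewrite gt_eqF.
  have lm1 : l1 - m1 != 0 by rewrite subr_eq0 gt_eqF.
  have lB : l1 * B - 1 < 0 by nra.
  have lBn : l1 * B - 1 != 0 by rewrite lt_eqF.
  have Bl : B - l1^-1 != 0.
    have -> : B - l1^-1 = (l1 * B - 1) / l1 by fld.
    by rewrite mulf_neq0 // invr_eq0.
  set s := l1^-1 * B / (B - l1^-1).
  have sE : s = B / (l1 * B - 1) by rewrite /s; fld.
  have s0 : 0 <= s.
    rewrite sE -mulrNN -invrN; apply: divr_ge0; lra.
  set uu := (1 + 2 * 0) * (l1 - m1)^-1 - s.
  have uuE : uu = (B * m1 - 1) / ((l1 - m1) * (l1 * B - 1)) by rewrite /uu sE; fld.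
  have uu0 : 0 < uu.
    rewrite uuE -mulrNN -invrN; apply: divr_gt0; nra.
  have uun : uu != 0 by rewrite gt_eqF.
  exists s, (m1 * (l1 - m1)^-1 / uu).
  split => //.
  + case: hor => [spp|Bn]; first lra.
    have : 0 < s by rewrite sE -mulrNN -invrN; apply: divr_gt0; lra.
    lra.
  + rewrite /cert -/uu hvv hc6.
    repeat split.
    * by [].
    * by [].
    * exact: ltW.
    * by [].
    * by rewrite mul0r add0r; fld.
    * by rewrite mul0r oppr0.
    * rewrite hrho le_eqVlt; apply/orP; left; apply/eqP.
      rewrite uuE; fld.
- have spp := hinf erefl.
  exists 0, 0.
  split => //.
  + by rewrite mul0r mul0r.
  + by rewrite add0r.
  + rewrite /cert hvv hc6.
    repeat split => //.
    * lra.
    * ring.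
    * by rewrite mul0r oppr0.
    * rewrite hrho.
      have -> : ((1 + 2 * 0) * 0 - 0) * 0 ^+ 2 + 0 * 0 ^+ 2 = 0 :> R by ring.
      have -> : (1 + 2 * 0) * m1 * (1 + m1 * 0) + m1 / (m1 * B - 1) = m1 * (m1 * B) / (m1 * B - 1) by fld.
      apply: mulr_le0; first nra.
      by rewrite invr_le0; lra.
Qed.

Lemma reg3 (m1 m2 : R) (L1 L2 : \bar R) :
  0 <= m1 -> (m1%:E < L1)%E -> (m2%:E < L2)%E ->
  (L1 < +oo)%E \/ (L2 < +oo)%E -> 0 < m1 + m2 \/ (m1 = 0 /\ m2 = 0) ->
  D_reg 3 m1 m2 L1 L2 ->
  exists s sp a b wu wv : R,
    [/\ p_reg 3 m1 m2 L1 L2 = s + sp, 0 <= s, 0 <= sp, 0 < s + sp &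
        cert m1 m2 (invE (L1 - m1%:E)%E) (invE (L2 - m2%:E)%E) a b s sp wu wv].
Proof.
move=> m10 h1 h2 hfin hpos [[m20 m1p] hm1L2 hm2L1 hB _].
have s12 : 0 < m1 + m2 by case: hpos => // [[_ e]]; lra.
have [b [sp [[b0 sp0] hsp hrho [hvv hc6] [hspp hor]]]] :=
  r3_L2 m20 m1p hm1L2 h2 erefl hB s12.
have hinf : L1 = +oo%E -> 0 < sp.
  move=> e; apply: hspp; case: hfin => //; by rewrite e.
have [s [wu [hs s0 p0 hc]]] := r3_L1 m1p m20 h1 hB b0 sp0 hrho hvv hc6 hinf hor.
exists s, sp, 0, b, wu, 0.
split => //.
by rewrite /p_reg /sig3 /sig3p hs hsp.
Qed.
End R123.

Lemma regime_cert (R : realType) (m1 m2 : R) (L1 L2 : \bar R) (i : nat) :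
  0 <= m1 -> (m1%:E < L1)%E -> (m2%:E < L2)%E ->
  (L1 < +oo)%E \/ (L2 < +oo)%E -> 0 < m1 + m2 \/ (m1 = 0 /\ m2 = 0) ->
  D_reg i m1 m2 L1 L2 ->
  exists s sp a b wu wv : R,
    [/\ p_reg i m1 m2 L1 L2 = s + sp, 0 <= s, 0 <= sp, 0 < s + sp &
        cert m1 m2 (invE (L1 - m1%:E)%E) (invE (L2 - m2%:E)%E) a b s sp wu wv].
Proof.
move=> m10 h1 h2 hfin hpos.
case: i => [|[|[|[|[|[|[|i]]]]]]] //= hD.
- exact: reg1.
- exact: reg2.
- exact: reg3.
- exact: reg4.
- exact: reg5.
- exact: reg6.
Qed.

Unset Implicit Arguments.

Theorem corollary1 (R : realType) (d : nat)
    (f1 f2 : 'rV[R]_d -> R) (m1 m2 : R) (L1 L2 : \bar R)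
    (Flo : R) (N : nat) (x g1 g2 : nat -> 'rV[R]_d) (i : nat) :
  0 <= m1 -> (m1%:E < L1)%E -> (m2%:E < L2)%E ->
  inFclass m1 L1 f1 -> inFclass m2 L2 f2 ->
  (* Flo = inf (f1 - f2), F bounded below *)
  (forall y, Flo <= f1 y - f2 y) ->
  (forall m, (forall y, m <= f1 y - f2 y) -> m <= Flo) ->
  (* dom subdiff f1 nonempty and contained in dom subdiff f2 *)
  (exists y g, subdiff m1 f1 y g) ->
  (forall y, (exists g, subdiff m1 f1 y g) -> exists g, subdiff m2 f2 y g) ->
  (* range subdiff f2 contained in range subdiff f1 *)
  (forall g, (exists y, subdiff m2 f2 y g) -> exists y, subdiff m1 f1 y g) ->
  (L1 < +oo)%E \/ (L2 < +oo)%E ->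
  0 < m1 + m2 \/ (m1 = 0 /\ m2 = 0) ->
  (1 <= N)%N ->
  (* DCA iterations *)
  subdiff m1 f1 (x 0%N) (g1 0%N) ->
  (forall k, (k < N)%N ->
     [/\ subdiff m2 f2 (x k) (g2 k),
         (forall w, f1 (x k.+1) - dotv (g2 k) (x k.+1) <= f1 w - dotv (g2 k) w)
       & g1 k.+1 = g2 k]) ->
  subdiff m2 f2 (x N) (g2 N) ->
  (* regime *)
  D_reg i m1 m2 L1 L2 ->
  let mn := min_upto N (fun k => sqn (g1 k - g2 k)) in
  mn / 2 <= ((f1 (x 0%N) - f2 (x 0%N)) - (f1 (x N) - f2 (x N)))
              / (p_reg i m1 m2 L1 L2 * N%:R)
  /\ ((m2%:E < L1)%E ->
      mn / 2 <= ((f1 (x 0%N) - f2 (x 0%N)) - Flo)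
                 / (p_reg i m1 m2 L1 L2 * N%:R + invE (L1 - m2%:E)%E)).
Proof.
move=> m10 hL1 hL2 hf1 hf2 hlo _ _ _ _ hfin hpos N1 s10 hit s2N hD mn.
have [s [sp [a [b [wu [wv [hp s0 sp0 p0 hc]]]]]]] :=
  regime_cert m10 hL1 hL2 hfin hpos hD.
rewrite hp.
have s1p : forall k, (k < N)%N -> subdiff m1 f1 (x k.+1) (g2 k).
  move=> k kN; have [_ ha _] := hit k kN.
  exact: (sub_argmin hf1 m10 ha).
have s1 : forall k, (k <= N)%N -> subdiff m1 f1 (x k) (g1 k).
  case=> [|k] kN //.
  have [_ _ ->] := hit k kN; exact: s1p.
have s2 : forall k, (k <= N)%N -> subdiff m2 f2 (x k) (g2 k).
  move=> k; rewrite leq_eqVlt => /orP [/eqP -> //|kN].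
  by have [] := hit k kN.
have step : forall k, (k < N)%N ->
   s / 2 * sqn (g1 k - g2 k) + sp / 2 * sqn (g1 k.+1 - g2 k.+1)
   <= (f1 (x k) - f2 (x k)) - (f1 (x k.+1) - f2 (x k.+1)).
  move=> k kN; have [_ _ e] := hit k kN; rewrite e.
  apply: (one_step hL1 hL2 hf1 hf2 _ _ _ _ hc).
  - exact: s1 (ltnW kN).
  - exact: s1p.
  - exact: s2 (ltnW kN).
  - exact: s2.
have A0 := @assemble R N (fun k => f1 (x k) - f2 (x k)) (fun k => sqn (g1 k - g2 k))
   s sp 0 Flo N1 s0 sp0 p0 (lexx 0) step.
split; first exact: A0.1.
move=> hL12.
have g0 : 0 <= invE (L1 - m2%:E)%E.
  move: hL12; case: (L1) => [l| |] //=; rewrite ?lte_fin => h.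
  by rewrite invr_ge0 subr_ge0 ltW.
have A1 := @assemble R N (fun k => f1 (x k) - f2 (x k)) (fun k => sqn (g1 k - g2 k))
   s sp _ Flo N1 s0 sp0 p0 g0 step.
apply: A1.2.
exact: (tail_bound hL1 hL12 hf1 (s1 N (leqnn N)) s2N hlo).
Qed.
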